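(* Consider any run of Algorithm 1 (described in the context). Whenever step (5) is executed with current set $S$ and current point $\bar x$, the inequality $$\sum_{i=1}^{k} d^k_ic^ix\ \ge\ \sum_{i=1}^{k-1}d^k_ic^i\bar x+d^k_k\lceil c^k\bar x\rceil$$ added in that step is satisfied by every point of $S\cap\mathbb{Z}^n$ and is violated by $\bar x$ (i.e. it is a cutting plane). Moreover, Algorithm 1 terminates after a finite number of iterations.
   Context: A lattice basis of $\mathbb{Z}^n$ is a set of $n$ linearly independent $c^1,\dots,c^n\in\mathbb{Z}^n$ such that every $v\in\mathbb{Z}^n$ is an integer combination of them. The associated lexicographic order: $x\prec y$ iff $x\ne y$ and $c^ix<c^iy$ for the smallest $i$ with $c^ix\ne c^iy$. For nonempty compact $T\subseteq\mathbb{R}^n$, the lex-min point of $T$ is the unique $\bar x\in T$ with $\bar x\prec x$ for all $x\in T\setminus\{\bar x\}$ (minimize $c^1x$ over $T$, then $c^2x$ over the minimizers, etc.). $K=\{x: c^ix\ge0,\ i=1,\dots,n\}$. $\mathcal S$ is a family of compact (not necessarily convex or connected) subsets of $\mathbb{R}^n$ such that $S\cap H\in\mathcal S$ whenever $S\in\mathcal S$ and $H$ is a closed halfspace; an oracle solves $\min\{cx:x\in S\}$ (or certifies $S=\emptyset$) for $S\in\mathcal S$. Algorithm 1. Input: nonempty $S\in\mathcal S$, $c\in\mathbb{Z}^n\setminus\{0\}$ with relatively prime entries, and a lattice basis $c^1,\dots,c^n$ with $c^1=c$. (1) Compute $\ell_i:=\lceil\min\{c^ix:x\in S\}\rceil$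 for all $i$; replace $S$ by $S-t$ where $t\in\mathbb{Z}^n$ is the vector with $c^it=\ell_i$ for all $i$; then replace $S$ by $S\cap K$. (2) If $S=\emptyset$, stop: no integer feasible point. (3) Else compute the lex-min point $\bar x$ of $S$. (4) If $\bar x\in\mathbb{Z}^n$, return $\bar x$. (5) Else let $k$ be the smallest index with $c^k\bar x\notin\mathbb{Z}$; set $d^k_k:=1$, $d^k_{k-1}:=\lceil c^k\bar x\rceil$ (if $k\ge2$), $d^k_i:=\lceil c^k\bar x\rceil\prod_{j=i+1}^{k-1}(c^j\bar x+1)$ for $i\le k-2$; replace $S$ by $S\cap H$, where $H$ is the halfspace $\sum_{i=1}^k d^k_ic^ix\ge\sum_{i=1}^{k-1}d^k_ic^i\bar x+d^k_k\lceil c^k\bar x\rceil$; go to (2). An iteration is one pass through steps (2)–(5). *)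

(* Defs.v *)
(* Points of R^n are row vectors 'rV[R]_n,
   the lattice basis c^1,...,c^n is the matrix C : 'M[int]_n whose i-th row
   (0-based index i : 'I_n) is c^(i+1). *)
From HB Require Import structures.
From mathcomp Require Import all_boot all_order all_algebra.
From mathcomp Require Import all_classical all_reals all_analysis.
Set Implicit Arguments. Unset Strict Implicit. Unset Printing Implicit Defensive.
Import Order.TTheory GRing.Theory Num.Theory.
Import numFieldNormedType.Exports.
Local Open Scope classical_set_scope.
Local Open Scope ring_scope.

Section Defs.
Variables (R : realType) (n : nat).

Definition intvec (v : 'rV[int]_n) : 'rV[R]_n := map_mx (fun z : int => z%:~R) v.

Definition cdot (C : 'M[int]_n) (i : 'I_n) (x : 'rV[R]_n) : R :=
  \sum_(j < n) (C i j)%:~R * x 0 j.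

Definition integral_pt (x : 'rV[R]_n) : Prop := forall j, x 0 j \is a Num.int.

Definition lattice_basis (C : 'M[int]_n) : Prop :=
  \rank (map_mx (fun z : int => z%:~R : R) C) = n /\
  forall v : 'rV[int]_n, exists lam : 'rV[int]_n, v = lam *m C.

Definition rel_prime_entries (c : 'rV[int]_n) : Prop :=
  (\big[gcdn/0%N]_(j < n) absz (c ord0 j))%N = 1%N.

Definition halfspace (a : 'rV[R]_n) (b : R) : set 'rV[R]_n :=
  [set x | b <= \sum_(j < n) a 0 j * x 0 j].

Definition is_minimum (A : set R) (m : R) : Prop := A m /\ forall y, A y -> m <= y.

Definition lexlt (C : 'M[int]_n) (x y : 'rV[R]_n) : Prop :=
  x <> y /\ exists i : 'I_n,
    (forall j : 'I_n, (j < i)%N -> cdot C j x = cdot C j y) /\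
    cdot C i x < cdot C i y.

Definition lexmin (C : 'M[int]_n) (T : set 'rV[R]_n) (xb : 'rV[R]_n) : Prop :=
  T xb /\ forall x, T x -> x <> xb -> lexlt C xb x.

Definition coneK (C : 'M[int]_n) : set 'rV[R]_n := [set x | forall i, 0 <= cdot C i x].

(* result of step (1): (S - t) /\ K *)
Definition step1_set (C : 'M[int]_n) (S : set 'rV[R]_n) (t : 'rV[int]_n) : set 'rV[R]_n :=
  [set y | S (y + intvec t)] `&` coneK C.

Definition first_nonint (C : 'M[int]_n) (xb : 'rV[R]_n) (k : 'I_n) : Prop :=
  ~ (cdot C k xb \is a Num.int) /\
  forall j : 'I_n, (j < k)%N -> cdot C j xb \is a Num.int.

(* coefficients d^k_i (0-based: i, k : 'I_n, only i <= k used):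
   d_k = 1,  d_i = ceil(c^k xb) * prod_{i<j<k} (c^j xb + 1) for i < k *)
Definition dcoef (C : 'M[int]_n) (xb : 'rV[R]_n) (k i : 'I_n) : R :=
  if i == k then 1
  else (Num.ceil (cdot C k xb))%:~R *
       \prod_(j < n | ((i < j)%N && (j < k)%N)) (cdot C j xb + 1).

Definition cut_plane (C : 'M[int]_n) (xb : 'rV[R]_n) (k : 'I_n) : set 'rV[R]_n :=
  [set x | \sum_(i < n | (i < k)%N) dcoef C xb k i * cdot C i xb
            + dcoef C xb k k * (Num.ceil (cdot C k xb))%:~R
           <= \sum_(i < n | (i <= k)%N) dcoef C xb k i * cdot C i x].

(* one iteration that reaches step (5): S nonempty, lex-min xb not integral,
   k first non-integral index, new set S /\ H *)
Definition alg_step (C : 'M[int]_n) (S S' : set 'rV[R]_n) : Prop :=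
  exists xb k, lexmin C S xb /\ ~ integral_pt xb /\ first_nonint C xb k /\
    S' = S `&` cut_plane C xb k.

(* the algorithm stops at the current set S: step (2) (S empty) or step (4)
   (lex-min point integral) *)
Definition alg_halts (C : 'M[int]_n) (S : set 'rV[R]_n) : Prop :=
  S = set0 \/ exists xb, lexmin C S xb /\ integral_pt xb.

End Defs.

(* Main.v *)
Require Import Defs.
From HB Require Import structures.
From mathcomp Require Import all_boot all_order all_algebra.
From mathcomp Require Import all_classical all_reals all_analysis.
From mathcomp Require Import ring lra zify.
Import Order.TTheory GRing.Theory Num.Theory.
Import numFieldNormedType.Exports.
Local Open Scope classical_set_scope.
Local Open Scope ring_scope.

Section NatCut.
Variable R : realType.

Definition Pn (A : nat -> R) k m := \prod_(m.+1 <= l < k) (A l + 1).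

Lemma tele (A : nat -> R) k j : (j < k)%N ->
  Pn A k j = 1 + \sum_(j.+1 <= m < k) A m * Pn A k m.
Proof.
move=> hjk; have [d hd] : exists d, k = (j + d.+1)%N.
  by exists (k - j.+1)%N; lia.
elim: d j hjk hd => [|d IH] j hjk hd.
  by rewrite /Pn hd addn1 !big_geq // addr0.
have hj1 : (j.+1 < k)%N by lia.
rewrite {1}/Pn (big_ltn hj1) (big_ltn hj1) -/(Pn A k j.+1).
rewrite (IH j.+1 hj1); last by lia.
ring.
Qed.

Definition Kc (A : nat -> R) k : R := (Num.ceil (A k))%:~R.
Definition Dn (A : nat -> R) k m : R := if m == k then 1 else Kc A k * Pn A k m.

Lemma cut_nat (A B : nat -> R) (k j : nat) :
  (forall m, (m < k)%N -> A m \is a Num.int) -> A k \isn't a Num.int ->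
  (forall m, (m <= k)%N -> 0 <= A m) -> (forall m, (m <= k)%N -> 0 <= B m) ->
  (forall m, (m <= k)%N -> B m \is a Num.int) ->
  (forall m, (m < j)%N -> A m = B m) -> A j < B j ->
  \sum_(0 <= m < k) Dn A k m * A m + Kc A k <= \sum_(0 <= m < k) Dn A k m * B m + B k.
Proof.
move=> Aint Akn A0 B0 Bint eqAB ltAB.
rewrite -/(Kc A k); set K := Kc A k; set D := Dn A k.
have K0 : 0 <= K by rewrite /K /Kc ler0z ceil_ge0 (lt_le_trans _ (A0 k (leqnn k))) // ltrN10.
have P0 m : 0 <= Pn A k m.
  rewrite /Pn big_nat_cond; apply: prodr_ge0 => l /andP [/andP [_ hl] _].
  by apply: addr_ge0 => //; apply: A0; apply: ltnW.
have D0 m : 0 <= D m by rewrite /D /Dn; case: (m == k) => //; apply: mulr_ge0.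
have [hjk|hjk|hjk] := ltngtP j k.
- rewrite !(big_cat_nat (leq0n j) (ltnW hjk)) /= !(big_ltn hjk) /=.
  have e1 : \sum_(0 <= m < j) D m * A m = \sum_(0 <= m < j) D m * B m.
    by apply: eq_big_nat => m /andP [_ hm]; rewrite eqAB.
  have SB2 : 0 <= \sum_(j.+1 <= m < k) D m * B m.
    rewrite big_nat_cond; apply: sumr_ge0 => m /andP [/andP [_ hm] _].
    by apply: mulr_ge0 => //; apply: B0; apply: ltnW.
  have Bk0 := B0 k (leqnn k).
  have hAB : A j + 1 <= B j.
    have /intrP [a ea] := Aint j hjk.
    have /intrP [b eb] := Bint j (ltnW hjk).
    move: ltAB; rewrite ea eb ltr_int -lezD1 => h.
    by rewrite -[1]/(1%:~R) -intrD ler_int.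
  have h1 : D j * (A j + 1) <= D j * B j by apply: ler_wpM2l.
  have h2 : D j = K + \sum_(j.+1 <= m < k) D m * A m.
    rewrite /D /Dn (ltn_eqF hjk) (tele A _ _ hjk) mulrDr mulr1 mulr_sumr.
    congr (_ + _); apply: eq_big_nat => m /andP [_ hm].
    by rewrite (ltn_eqF hm); ring.
  rewrite e1; lra.
- exfalso; move/negP: Akn; apply; rewrite (eqAB k hjk); exact: Bint.
- rewrite hjk in ltAB.
  have e1 : \sum_(0 <= m < k) D m * A m = \sum_(0 <= m < k) D m * B m.
    by apply: eq_big_nat => m /andP [_ hm]; rewrite eqAB // hjk.
  rewrite e1 lerD2l.
  have /intrP [b eb] := Bint k (leqnn k).
  by rewrite eb /K /Kc ler_int ceil_le_int -eb ltW.
Qed.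

Lemma cut_nat_viol (A : nat -> R) (k : nat) (D : nat -> R) :
  A k \isn't a Num.int ->
  \sum_(0 <= m < k) D m * A m + A k < \sum_(0 <= m < k) D m * A m + (Num.ceil (A k))%:~R.
Proof.
move=> Akn; rewrite ltrD2l lt_neqAle ceil_ge andbT.
by apply: contra Akn => /eqP e; rewrite e intr_int.
Qed.

End NatCut.
Arguments Dn {R}. Arguments Kc {R}. Arguments Pn {R}.

Section Helpers.
Variables (R : realType) (n : nat).
Implicit Types (x y : 'rV[R]_n) (C : 'M[int]_n).

Lemma cdotD C i x y : cdot C i (x + y) = cdot C i x + cdot C i y.
Proof. rewrite /cdot -big_split /=; by apply: eq_bigr => j _; rewrite mxE mulrDr. Qed.

Lemma cont_sum (s : seq 'I_n) (P : pred 'I_n) (F : 'I_n -> 'rV[R]_n -> R) :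
  (forall i, continuous (F i)) -> continuous (fun x => \sum_(i <- s | P i) F i x).
Proof.
move=> Fc; elim: s => [|a s IH].
  under eq_fun do rewrite big_nil. exact: cst_continuous.
under eq_fun do rewrite big_cons.
case: (P a) => //.
move=> x; exact: (cvgD (Fc a x) (IH x)).
Qed.

Lemma cdot_cont C i : continuous (fun x : 'rV[R]_n => cdot C i x).
Proof.
rewrite /cdot; apply: cont_sum => j x.
have := @continuousM _ _ (fun=> (C i j)%:~R) (fun y : 'rV[R]_n => y 0 j) x; apply; [exact: cst_continuous | exact: coord_continuous]. Qed.

Lemma cdot_inv C : lattice_basis R C ->
  exists L : 'I_n -> 'I_n -> int, forall x j, x 0 j = \sum_i (L j i)%:~R * cdot C i x.
Proof.
case=> _ hv.
have /choice [lam hlam] : forall j : 'I_n, exists lam : 'rV[int]_n,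
    (delta_mx 0 j : 'rV[int]_n) = lam *m C by move=> j; exact: hv.
exists (fun j i => lam j 0 i) => x j.
have key m : ((j == m)%:R : R) = \sum_i (lam j 0 i)%:~R * (C i m)%:~R.
  have := congr1 (fun M : 'rV[int]_n => (M 0 m)%:~R : R) (hlam j).
  rewrite /= !mxE eqxx /= rmorph_sum (eq_bigr _ (fun i _ => intrM _ _ _)) => <-.
  by rewrite eq_sym; case: (m == j).
transitivity (\sum_m x 0 m * (j == m)%:R).
  rewrite (bigD1 j) //= eqxx mulr1 big1 ?addr0 // => m /negbTE.
  by rewrite eq_sym => ->; rewrite mulr0.
transitivity (\sum_m \sum_i x 0 m * ((lam j 0 i)%:~R * (C i m)%:~R)).
  by apply: eq_bigr => m _; rewrite key mulr_sumr.
rewrite exchange_big; apply: eq_bigr => i _; rewrite /cdot mulr_sumr.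
by apply: eq_bigr => m _; rewrite mulrCA; congr (_ * _); exact: mulrC.
Qed.


Lemma intpt_cdot C x i : integral_pt x -> cdot C i x \is a Num.int.
Proof.
move=> hx; rewrite /cdot; apply: rpred_sum => j _; apply: rpredM; [exact: intr_int | exact: hx].
Qed.

Lemma cdot_intpt C x : lattice_basis R C -> (forall i, cdot C i x \is a Num.int) -> integral_pt x.
Proof.
move=> /cdot_inv [L hL] h j; rewrite hL; apply: rpred_sum => i _.
by apply: rpredM; [exact: intr_int | exact: h].
Qed.

Lemma cdot_inj C x y : lattice_basis R C -> (forall i, cdot C i x = cdot C i y) -> x = y.
Proof.
move=> /cdot_inv [L hL] h; apply/rowP => j; rewrite (hL x) (hL y).
by apply: eq_bigr => i _; rewrite h.
Qed.

Lemma lexmin_ex C : lattice_basis R C -> forall T : set 'rV[R]_n, compact T -> T !=set0 ->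
  exists xb, lexmin C T xb.
Proof.
move=> hC T cT T0.
suff: forall m, (m <= n)%N -> exists Tm : set 'rV[R]_n, [/\ compact Tm, Tm !=set0, Tm `<=` T,
   (forall x y, Tm x -> Tm y -> forall i : 'I_n, (i < m)%N -> cdot C i x = cdot C i y) &
   ((forall x y, Tm x -> T y -> ~ Tm y -> exists i : 'I_n, (i < m)%N /\ (forall j : 'I_n, (j < i)%N -> cdot C j x = cdot C j y) /\ cdot C i x < cdot C i y) /\
   (forall x y, Tm x -> T y -> (forall i : 'I_n, (i < m)%N -> cdot C i y = cdot C i x) -> Tm y))].
  move=> /(_ n (leqnn n)) [Tm [cTm [xb Txb] sTm heq [hlex hcl]]].
  exists xb; split; first exact: sTm.
  move=> x Tx nx.
  have [Tmx|nTmx] := pselect (Tm x).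
    by exfalso; apply: nx; apply: (@cdot_inj C x xb hC) => i; apply: heq.
  have [i [_ hi]] := hlex xb x Txb Tx nTmx.
  by split; [move=> e; apply: nx; rewrite e | exists i].
elim=> [|m IH] hm.
  by exists T; split => //.
have [Tm [cTm Tm0 sTm heq [hlex hcl]]] := IH (ltnW hm).
pose io : 'I_n := Ordinal hm.
have [c Tmc cmin] := compact_EVT_min Tm0 cTm (continuous_subspaceT (cdot_cont C io)).
have {}Tmc : Tm c by rewrite inE in Tmc.
pose mu := cdot C io c.
exists (Tm `&` [set x | cdot C io x = mu]); split.
- apply: compact_closedI cTm _.
  apply: (@preimage_closed _ _ (fun x => cdot C io x) [set y | y = mu]).
    by move=> x _; exact: cdot_cont.
  exact: closed_eq.
- by exists c.
- by move=> x [Tx _]; exact: sTm.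
- move=> x y [Tx ex] [Ty ey] i; rewrite ltnS leq_eqVlt => /orP [/eqP ei|lt].
    have -> : i = io by apply: val_inj.
    by rewrite ex ey.
  exact: heq.
split.
- move=> x y [Tmx ex] Ty nT'y.
  have [Tmy|nTmy] := pselect (Tm y).
    have ney : cdot C io y != mu by apply/eqP => e; apply: nT'y.
    have le : mu <= cdot C io y by apply: cmin; rewrite inE.
    exists io; split => //; split.
      by move=> j hj; apply: heq.
    by rewrite ex lt_neqAle eq_sym ney le.
  have [i [hi rest]] := hlex x y Tmx Ty nTmy.
  by exists i; split => //; rewrite ltnS ltnW.
- move=> x y [Tmx ex] Ty hxy; split.
    by apply: (hcl x y Tmx Ty) => i hi; apply: hxy; rewrite ltnS ltnW.
  by rewrite /= (hxy io (ltnSn m)).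
Qed.


Lemma sum_conv b (G : nat -> R) : (b <= n)%N ->
  \sum_(i < n | (i < b)%N) G i = \sum_(0 <= m < b) G m.
Proof.
move=> hb; rewrite big_mkord (big_ord_widen_cond n xpredT G hb).
by apply: eq_bigl.
Qed.

Lemma sum_conv_le (k : 'I_n) (G : nat -> R) :
  \sum_(i < n | (i <= k)%N) G i = \sum_(0 <= m < k) G m + G k.
Proof.
by rewrite -big_nat_recr //= -sum_conv ?ltn_ord.
Qed.

Lemma prod_conv b j (G : nat -> R) : (b <= n)%N ->
  \prod_(l < n | (j < l)%N && (l < b)%N) G l = \prod_(j.+1 <= l < b) G l.
Proof.
move=> hb; rewrite big_geq_mkord (big_ord_widen_cond n _ G hb).
by apply: eq_bigl.
Qed.

Definition Av C (k : 'I_n) (y : 'rV[R]_n) (m : nat) := cdot C (insubd k m) y.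

Lemma Av_val C k y (i : 'I_n) : Av C k y i = cdot C i y.
Proof. by rewrite /Av valKd. Qed.

Lemma dcoef_conv C xb (k i : 'I_n) : dcoef C xb k i = Dn (Av C k xb) k i.
Proof.
rewrite /dcoef /Dn /Kc Av_val.
have -> : (i == k) = (val i == val k) by [].
case: (val i == val k) => //; congr (_ * _).
rewrite /Pn -(prod_conv _ _ _ (ltnW (ltn_ord k))).
by apply: eq_bigr => l _; rewrite Av_val. Qed.

Lemma cut_conv C xb (k : 'I_n) x : cut_plane C xb k x <->
  \sum_(0 <= m < k) Dn (Av C k xb) k m * Av C k xb m + Kc (Av C k xb) k <=
  \sum_(0 <= m < k) Dn (Av C k xb) k m * Av C k x m + Av C k x k.
Proof.
have eL : \sum_(i < n | (i < k)%N) dcoef C xb k i * cdot C i xb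
    = \sum_(0 <= m < k) Dn (Av C k xb) k m * Av C k xb m.
  rewrite -(sum_conv k (fun m => Dn (Av C k xb) k m * Av C k xb m) (ltnW (ltn_ord k))).
  by apply: eq_bigr => i _; rewrite dcoef_conv Av_val.
have eR : \sum_(i < n | (i <= k)%N) dcoef C xb k i * cdot C i x
    = \sum_(0 <= m < k) Dn (Av C k xb) k m * Av C k x m + Av C k x k.
  rewrite (eq_bigr (fun i : 'I_n => Dn (Av C k xb) k i * Av C k x i)); last first.
    by move=> i _; rewrite dcoef_conv Av_val.
  by rewrite (sum_conv_le k (fun m => Dn (Av C k xb) k m * Av C k x m)) /Dn eqxx mul1r.
have eK : dcoef C xb k k * (Num.ceil (cdot C k xb))%:~R = Kc (Av C k xb) k.
  by rewrite /dcoef eqxx mul1r /Kc Av_val.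
rewrite /cut_plane /mkset; cbv beta.
by rewrite eL eR eK. Qed.


Lemma Av_ord C k y m (hm : (m < n)%N) : Av C k y m = cdot C (Ordinal hm) y.
Proof. by rewrite /Av; congr cdot; apply: val_inj; rewrite val_insubd hm. Qed.

Lemma cut_valid C xb (k : 'I_n) x :
  coneK C xb -> coneK C x -> integral_pt x -> lexlt C xb x -> first_nonint C xb k ->
  cut_plane C xb k x.
Proof.
move=> Kxb Kx ix [_ [j [hpre hlt]]] [nk hk].
have kn := ltn_ord k.
apply/cut_conv; apply: (@cut_nat R (Av C k xb) (Av C k x) k j).
- move=> m hm; have hmn : (m < n)%N by apply: ltn_trans kn.
  by rewrite (Av_ord _ _ _ _ hmn); apply: hk.
- by rewrite Av_val; apply/negP.
- move=> m hm; have hmn : (m < n)%N by apply: leq_ltn_trans kn.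
  by rewrite (Av_ord _ _ _ _ hmn); apply: Kxb.
- move=> m hm; have hmn : (m < n)%N by apply: leq_ltn_trans kn.
  by rewrite (Av_ord _ _ _ _ hmn); apply: Kx.
- move=> m hm; have hmn : (m < n)%N by apply: leq_ltn_trans kn.
  by rewrite (Av_ord _ _ _ _ hmn); apply: intpt_cdot.
- move=> m hm; have hmn : (m < n)%N by apply: ltn_trans (ltn_ord j).
  by rewrite !(Av_ord _ _ _ _ hmn); apply: hpre.
- by rewrite !Av_val.
Qed.

Lemma cut_viol C (xb : 'rV[R]_n) k : first_nonint C xb k -> ~ cut_plane C xb k xb.
Proof.
move=> [nk _] /cut_conv; apply/negP; rewrite -ltNge.
have := @cut_nat_viol R (Av C k xb) k (Dn (Av C k xb) k).
rewrite /Kc !Av_val; apply; exact/negP.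
Qed.

Lemma cut_ceil C xb (k : 'I_n) x : cut_plane C xb k x ->
  (forall j : 'I_n, (j < k)%N -> cdot C j x = cdot C j xb) ->
  (Num.ceil (cdot C k xb))%:~R <= cdot C k x.
Proof.
move=> /cut_conv h heq.
have kn := ltn_ord k.
have e : \sum_(0 <= m < k) Dn (Av C k xb) k m * Av C k x m =
         \sum_(0 <= m < k) Dn (Av C k xb) k m * Av C k xb m.
  apply: eq_big_nat => m /andP [_ hm]; have hmn : (m < n)%N by apply: ltn_trans kn.
  by rewrite !(Av_ord _ _ _ _ hmn) heq.
by move: h; rewrite e lerD2l /Kc !Av_val.
Qed.

Lemma ev_const (h : nat -> int) p0 B :
  (forall q, (p0 <= q)%N -> h q <= h q.+1) -> (forall q, (p0 <= q)%N -> h q <= B) ->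
  exists p1, (p0 <= p1)%N /\ forall q, (p1 <= q)%N -> h q.+1 = h q.
Proof.
move=> mono bnd.
have mt : forall p q, (p0 <= p)%N -> (p <= q)%N -> h p <= h q.
  move=> p q hp; elim: q => [|q IH]; first by rewrite leqn0 => /eqP ->.
  rewrite leq_eqVlt => /orP [/eqP ->//|]; rewrite ltnS => hpq.
  exact: le_trans (IH hpq) (mono q (leq_trans hp hpq)).
suff main : forall N : nat, forall p, (p0 <= p)%N -> B - h p <= N%:Z ->
    exists p1, (p <= p1)%N /\ forall q, (p1 <= q)%N -> h q.+1 = h q.
  have [p1 [hp1 H]] := main `|B - h p0|%N p0 (leqnn p0) ltac:(lia).
  by exists p1.
elim=> [|N IH] p hp hN;
  (have [allc|] := pselect (forall q, (p <= q)%N -> h q.+1 = h q); first by exists p);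
  move=> /existsNP [q /not_implyP [hq nq]];
  (have lt : h q < h q.+1 by rewrite lt_neqAle mono ?(leq_trans hp hq) // andbT;
     apply/eqP => e; apply: nq; rewrite e);
  have hpq := mt p q hp hq;
  have hq1 : (p0 <= q.+1)%N by apply: leq_trans hp (leq_trans hq (leqnSn q)).
- have := bnd q.+1 hq1; lia.
- have [p1 [h1 H]] := IH q.+1 hq1 ltac:(lia).
  exists p1; split => //; apply: leq_trans hq (leq_trans (leqnSn q) h1).
Qed.

Lemma no_inf C (S0 : set 'rV[R]_n) :
  (forall i : 'I_n, exists U, forall x, S0 x -> cdot C i x <= U) ->
  forall Sq : nat -> set 'rV[R]_n, Sq 0%N = S0 -> ~ (forall p, alg_step C (Sq p) (Sq p.+1)).
Proof.
move=> Ub Sq h0 hst.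
have /choice [xk hxk] : forall p, exists xk : 'rV[R]_n * 'I_n,
    [/\ lexmin C (Sq p) xk.1, ~ integral_pt xk.1, first_nonint C xk.1 xk.2 &
     Sq p.+1 = Sq p `&` cut_plane C xk.1 xk.2].
  by move=> p; have [xb [k [? [? [? ?]]]]] := hst p; exists (xb, k).
pose xb p := (xk p).1; pose kk p := (xk p).2.
have sub : forall p q, (p <= q)%N -> Sq q `<=` Sq p.
  move=> p q; elim: q => [|q IH]; first by rewrite leqn0 => /eqP ->.
  rewrite leq_eqVlt => /orP [/eqP ->//|]; rewrite ltnS => hpq.
  have [_ _ _ e] := hxk q; rewrite e => y [Sy _]; exact: IH.
have mem p : Sq p (xb p) by have [[? _] _ _ _] := hxk p.
have F3 p q : (p <= q)%N -> xb q = xb p \/ lexlt C (xb p) (xb q).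
  move=> hpq; have [[_ lm] _ _ _] := hxk p.
  have [e|ne] := pselect (xb q = xb p); first by left.
  by right; apply: lm => //; apply: sub hpq _ (mem q).
have F4 p : cut_plane C (xb p) (kk p) (xb p.+1).
  by have [_ _ _ e] := hxk p; have := mem p.+1; rewrite e; case.
have fn p : first_nonint C (xb p) (kk p) by have [] := hxk p.
suff claim : forall i, (i <= n)%N -> exists p0, forall q, (p0 <= q)%N ->
    forall l : 'I_n, (l < i)%N ->
      cdot C l (xb q) = cdot C l (xb p0) /\ cdot C l (xb p0) \is a Num.int.
  have [p0 hp0] := claim n (leqnn n).
  have [nk _] := fn p0.
  by apply: nk; have [_ ] := hp0 p0 (leqnn p0) (kk p0) (ltn_ord _).
elim=> [|i IH] hi.
  by exists 0%N => q _ l; rewrite ltn0.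
have [p0 hp0] := IH (ltnW hi).
pose io : 'I_n := Ordinal hi.
pose f q := cdot C io (xb q).
have pre q (l : 'I_n) : (p0 <= q)%N -> (l < i)%N -> cdot C l (xb q) = cdot C l (xb p0).
  by move=> hq hl; have [] := hp0 q hq l hl.
have mono q : (p0 <= q)%N -> f q <= f q.+1.
  move=> hq; have [e|[_ [j [hj hlt]]]] := F3 q q.+1 (leqnSn q); first by rewrite /f e.
  have [hji|hji|hji] := ltngtP j i.
  - exfalso; move: hlt; rewrite (pre q j hq hji) (pre q.+1 j (leq_trans hq (leqnSn q)) hji).
    by rewrite ltxx.
  - by rewrite /f (hj io hji).
  - have e : io = j by apply: val_inj; rewrite /= hji.
    by rewrite /f e; exact: ltW.
have kge q : (p0 <= q)%N -> ~ (kk q < i)%N.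
  move=> hq hk; have [nk _] := fn q; apply: nk.
  by rewrite (pre q (kk q) hq hk); have [] := hp0 q hq (kk q) hk.
have kint q : (p0 <= q)%N -> kk q != io -> f q \is a Num.int.
  move=> hq hne; have [_ hk] := fn q; apply: hk.
  have h1 : (i <= kk q)%N by rewrite leqNgt; apply/negP; exact: kge q hq.
  have h2 : (i != kk q).
    by apply: contra hne => /eqP e; apply/eqP; apply: val_inj; rewrite /= -e.
  by rewrite /= ltn_neqAle h2 h1.
have kceil q : (p0 <= q)%N -> kk q = io -> (Num.ceil (f q))%:~R <= f q.+1.
  move=> hq e; rewrite /f -e.
  apply: (@cut_ceil C (xb q) (kk q) (xb q.+1) (F4 q)) => j hj.
  rewrite e in hj.
  by rewrite (pre q.+1 j (leq_trans hq (leqnSn q)) hj) (pre q j hq hj).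
pose h q : int := Num.floor (f q) + Num.ceil (f q).
have hmono q : (p0 <= q)%N -> h q <= h q.+1.
  by move=> hq; rewrite /h; apply: lerD; [apply: le_floor | apply: le_ceil]; exact: mono q hq.
have [U hU] := Ub io.
have hB q : (p0 <= q)%N -> h q <= Num.ceil U + Num.ceil U.
  move=> hq.
  have fc : Num.floor (f q) <= Num.ceil (f q).
    by rewrite -(ler_int R); apply: le_trans (floor_le _) (ceil_ge _).
  have cu : Num.ceil (f q) <= Num.ceil U by apply: le_ceil; apply: hU; rewrite -h0; apply: sub (leq0n q) _ (mem q).
  by rewrite /h; apply: lerD (le_trans fc cu) cu.
have hstrict q : (p0 <= q)%N -> h q.+1 = h q -> f q \is a Num.int /\ f q.+1 = f q.
  move=> hq eh.
  have [e|ne] := eqVneq (kk q) io.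
  - exfalso; have [nk _] := fn q; rewrite e in nk.
    have hc := kceil q hq e.
    have c1 : Num.ceil (f q) = Num.floor (f q) + 1.
      by rewrite ceil_floor; have -> : (f q \isn't a Num.int) = true by apply/negP.
    have f1 : Num.ceil (f q) <= Num.floor (f q.+1) by rewrite floor_ge_int.
    have f2 : Num.ceil (f q) <= Num.ceil (f q.+1) by move: (le_ceil hc); rewrite intrKceil.
    move: eh; rewrite /h; lia.
  - have fi := kint q hq ne; split => //.
    have m := mono q hq.
    have [//|lt] := eqVneq (f q.+1) (f q).
    exfalso; have lt' : f q < f q.+1 by rewrite lt_def lt m.
    have /intrP [z ez] := fi.
    have c1 : Num.ceil (f q) = z by rewrite ez intrKceil.
    have c2 : Num.floor (f q) = z by rewrite ez intrKfloor.
    have c3 : z < Num.ceil (f q.+1) by rewrite ceil_gt_int -ez.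
    have c4 : z <= Num.floor (f q.+1) by rewrite floor_ge_int -ez; exact: ltW.
    move: eh; rewrite /h c1 c2; lia.
have [p1 [hp1 hc]] := ev_const h p0 (Num.ceil U + Num.ceil U) hmono hB.
have st q : (p1 <= q)%N -> f q \is a Num.int /\ f q.+1 = f q.
  by move=> hq; apply: hstrict (leq_trans hp1 hq) (hc q hq).
have fc q : (p1 <= q)%N -> f q = f p1.
  elim: q => [|q IHq]; first by rewrite leqn0 => /eqP ->.
  rewrite leq_eqVlt => /orP [/eqP ->//|]; rewrite ltnS => hq.
  by rewrite (st q hq).2 IHq.
exists p1 => q hq l hl.
move: hl; rewrite ltnS leq_eqVlt => /orP [/eqP e|hli].
- have -> : l = io by apply: val_inj.
  by split; [exact: fc q hq | exact: (st p1 (leqnn p1)).1].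
- rewrite (pre q l (leq_trans hp1 hq) hli) (pre p1 l hp1 hli); split => //.
  by have [] := hp0 p0 (leqnn p0) l hli.
Qed.

Lemma first_ex C x : lattice_basis R C -> ~ integral_pt x -> exists k, first_nonint C x k.
Proof.
move=> hC ni.
have [i ni'] : exists i : 'I_n, ~ (cdot C i x \is a Num.int).
  apply/existsNP => H; apply: ni; apply: cdot_intpt hC _ => i.
  by have := H i; case: (cdot C i x \is a Num.int).
suff: forall m (i : 'I_n), (i <= m)%N -> ~ (cdot C i x \is a Num.int) ->
    exists k, first_nonint C x k by apply; [exact: leqnn | exact: ni'].
elim=> [|m IH] j hj nj.
  exists j; split => // l hl; exfalso; move: hl; rewrite leqn0 in hj.
  by rewrite (eqP hj).
have [[l [hl nl]]|H] := pselect (exists l : 'I_n, (l < j)%N /\ ~ (cdot C l x \is a Num.int)).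
  by apply: (IH l) => //; rewrite -ltnS; apply: leq_trans hl hj.
exists j; split => // l hl.
by case: (boolP (cdot C l x \is a Num.int)) => // nl; exfalso; apply: H; exists l; split => //; apply/negP.
Qed.

Lemma cut_closed C (xb : 'rV[R]_n) k : closed (cut_plane C xb k).
Proof.
pose g x := \sum_(i < n | (i <= k)%N) dcoef C xb k i * cdot C i x.
pose b := \sum_(i < n | (i < k)%N) dcoef C xb k i * cdot C i xb
            + dcoef C xb k k * (Num.ceil (cdot C k xb))%:~R.
have -> : cut_plane C xb k = g @^-1` [set y | b <= y] by [].
apply: preimage_closed; last exact: closed_ge.
move=> x _; rewrite /g; apply: cont_sum => i y.
have := @continuousM _ _ (fun=> dcoef C xb k i) (fun y : 'rV[R]_n => cdot C i y) y.
by apply; [exact: cst_continuous | exact: cdot_cont].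
Qed.

Lemma step_ex C (T : set 'rV[R]_n) : lattice_basis R C -> compact T -> ~ alg_halts C T ->
  exists T', alg_step C T T' /\ compact T'.
Proof.
move=> hC cT nh.
have T0 : T !=set0 by apply/set0P; apply/eqP => e; apply: nh; left.
have [xb hxb] := @lexmin_ex C hC T cT T0.
have ni : ~ integral_pt xb by move=> ix; apply: nh; right; exists xb.
have [k hk] := @first_ex C xb hC ni.
exists (T `&` cut_plane C xb k); split.
  by exists xb, k.
by apply: compact_closedI cT _; exact: cut_closed.
Qed.

End Helpers.





Theorem proposition2 (R : realType) (n : nat)
  (SS : set (set 'rV[R]_n))
  (SS_compact : forall T, SS T -> compact T)
  (SS_half : forall T (a : 'rV[R]_n) (b : R), SS T -> a != 0 ->
               SS (T `&` halfspace a b))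
  (S : set 'rV[R]_n) (hS : SS S) (hSne : S !=set0)
  (c : 'rV[int]_n) (hc0 : c != 0) (hcp : rel_prime_entries c)
  (C : 'M[int]_n) (hC : lattice_basis R C)
  (hc1 : forall i : 'I_n, val i = 0%N -> row i C = c)
  (l : 'I_n -> int)
  (hl : forall i, exists2 m, is_minimum [set cdot C i x | x in S] m & l i = Num.ceil m)
  (t : 'rV[int]_n) (ht : forall i, cdot C i (intvec R t) = (l i)%:~R) :
  let S0 := step1_set C S t in
  (* every step (5) adds a valid cutting plane *)
  (forall (m : nat) (Sq : nat -> set 'rV[R]_n),
     Sq 0%N = S0 -> (forall p, (p < m)%N -> alg_step C (Sq p) (Sq p.+1)) ->
     forall (xb : 'rV[R]_n) (k : 'I_n),
       lexmin C (Sq m) xb -> ~ integral_pt xb -> first_nonint C xb k ->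
       (forall x, Sq m x -> integral_pt x -> cut_plane C xb k x) /\ ~ cut_plane C xb k xb)
  /\
  (* finite termination: no infinite run, and the run stops after finitely
     many iterations *)
  (forall Sq : nat -> set 'rV[R]_n,
     Sq 0%N = S0 -> ~ (forall p, alg_step C (Sq p) (Sq p.+1)))
  /\
  (exists (M : nat) (Sq : nat -> set 'rV[R]_n),
     Sq 0%N = S0 /\ (forall p, (p < M)%N -> alg_step C (Sq p) (Sq p.+1)) /\
     alg_halts C (Sq M)).

Proof.
move=> S0.
have hS0K : S0 `<=` coneK C by move=> x [].
have hS0c : compact S0.
  have e : [set y | S (y + intvec R t)] = (fun x => x - intvec R t) @` S.
    apply/seteqP; split => y /=.
      by move=> Sy; exists (y + intvec R t) => //; rewrite addrK.
    by case=> x Sx <-; rewrite subrK.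
  rewrite /S0 /step1_set e; apply: compact_closedI.
    apply: continuous_compact; last exact: SS_compact.
    apply: continuous_subspaceT => x; first [exact: (continuousB (@cvg_id _ (nbhs x)) (cvg_cst _)) | exact: (cvgB cvg_id (cvg_cst (intvec R t))) | (have := @continuousB _ _ _ (fun y => y) (fun=> intvec R t) x; apply; [exact: cvg_id | exact: cvg_cst])].
  have -> : (coneK C : set 'rV[R]_n) = \bigcap_(i in [set: 'I_n]) [set x : 'rV[R]_n | 0 <= cdot C i x].
    by apply/seteqP; split => x /= h i; [move=> _; exact: h | exact: h].
  apply: closed_bigI => i _.
  apply: (@preimage_closed _ _ (fun x => cdot C i x) [set y | 0 <= y]); last exact: closed_ge.
  by move=> x _; exact: cdot_cont.
have subS0 : forall (m : nat) (Sq : nat -> set 'rV[R]_n), Sq 0%N = S0 ->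
    (forall p, (p < m)%N -> alg_step C (Sq p) (Sq p.+1)) ->
    forall p, (p <= m)%N -> Sq p `<=` S0.
  move=> m Sq h0 hst; elim => [|p IH] hp; first by rewrite h0.
  have [xb [k [_ [_ [_ e]]]]] := hst p hp.
  by rewrite e => y [Sy _]; apply: IH => //; exact: ltnW.
have part2 : forall Sq : nat -> set 'rV[R]_n, Sq 0%N = S0 ->
    ~ (forall p, alg_step C (Sq p) (Sq p.+1)).
  apply: (@no_inf R n C S0) => i.
  have [[x0 Sx0]|n0] := pselect (S0 !=set0).
    have [c0 Sc cmax] := compact_EVT_max (ex_intro _ x0 Sx0) hS0c
      (continuous_subspaceT (@cdot_cont R n C i)).
    by exists (cdot C i c0) => x Sx; apply: cmax; rewrite inE.
  by exists 0 => x Sx; exfalso; apply: n0; exists x.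
split.
  move=> m Sq h0 hst xb k hlex hni hk.
  have sub := subS0 m Sq h0 hst m (leqnn m).
  have [Sxb lm] := hlex.
  split; last exact: (@cut_viol R n C xb k hk).
  move=> x Sx ix.
  apply: (@cut_valid R n C xb k x) => //.
  - exact: hS0K (sub _ Sxb).
  - exact: hS0K (sub _ Sx).
  - by apply: lm => // e; apply: hni; rewrite -e.
split; first exact: part2.
match goal with |- ?G => have [//|nex] := pselect G end.
exfalso.
have /choice [F hF] : forall T : set 'rV[R]_n, exists T',
    compact T /\ ~ alg_halts C T -> alg_step C T T' /\ compact T'.
  move=> T; have [[cT nh]|nc] := pselect (compact T /\ ~ alg_halts C T).
    by have [T' hT'] := @step_ex R n C T hC cT nh; exists T'.
  by exists T.
pose Sq p := iter p F S0.
have key : forall p, compact (Sq p) /\ (forall q, (q < p)%N -> alg_step C (Sq q) (Sq q.+1)).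
  elim => [|p [cp hp]]; first by split => // q; rewrite ltn0.
  have nh : ~ alg_halts C (Sq p) by move=> h; apply: nex; exists p, Sq; split => //; split.
  have [st cp'] := hF (Sq p) (conj cp nh).
  split; first exact: cp'.
  move=> q; rewrite ltnS leq_eqVlt => /orP [/eqP ->|hq]; [exact: st | exact: hp].
by apply: (part2 Sq erefl) => p; apply: (key p.+1).2; exact: ltnSn.
Qed.
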